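(* Let $X\subseteq\{0,1\}^n$ be a nonempty set, let $U\subseteq\mathbb{R}^{n+1}$ be a nonempty compact set, define $f(x):=\max_{(c_0,c)\in U}\, c^\top x+c_0$ for $x\in\mathbb{R}^n$, and let $P:=\operatorname{conv}(X)$. Then Algorithm SD (described in the context) terminates after a finite number of iterations, and the point $x^k$ it outputs is a minimizer of $f$ over $P$.
   Context: For a convex function $f$, $\partial f(x)$ denotes its subdifferential at $x$. For a convex set $C$ and $x\in C$, $\mathcal{N}_C(x)=\{d\in\mathbb{R}^n: d^\top(y-x)\le 0\ \forall y\in C\}$ is the normal cone of $C$ at $x$. Algorithm SD: pick any $\hat x^0\in X$ and set $V^1=\{\hat x^0\}$. For $k=1,2,\dots$: compute (by any method) $\alpha^k\in\mathbb{R}^{V^k}_+$ with $\sum_{v\in V^k}\alpha^k_v=1$, the point $x^k=\sum_{v\in V^k}\alpha^k_v v$, and a vector $c^k\in\partial f(x^k)\cap(-\mathcal{N}_{\operatorname{conv}(V^k)}(x^k))$; then compute a minimizer $\hat x^k$ of $\min_{x\in X}(c^k)^\top x$. If $(c^k)^\top\hat x^k\ge (c^k)^\top x^k$, stop and output $x^k$; otherwise set $V^{k+1}:=V^k\cup\{\hat x^k\}$ and continue. *)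

(* Defs.v *)
From HB Require Import structures.
From mathcomp Require Import all_boot all_order all_algebra.
From mathcomp Require Import all_classical all_reals all_analysis.
Set Implicit Arguments. Unset Strict Implicit. Unset Printing Implicit Defensive.
Import Order.TTheory GRing.Theory Num.Theory.
Import numFieldNormedType.Exports.
Local Open Scope classical_set_scope.
Local Open Scope ring_scope.

Section Defs.
Variables (R : realType) (n : nat).
Notation vec := 'rV[R]_n.

Definition dot (c x : vec) : R := \sum_(i < n) c 0 i * x 0 i.

Definition chull (A : set vec) : set vec :=
  [set x | exists (s : seq vec) (l : vec -> R),
     [/\ {subset s <= A}, uniq s, (forall v, v \in s -> 0 <= l v),
         \sum_(v <- s) l v = 1 & x = \sum_(v <- s) l v *: v]].

Definition subdiff (f : vec -> R) (x : vec) : set vec :=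
  [set g | forall y, f x + dot g (y - x) <= f y].

Definition normal_cone (C : set vec) (x : vec) : set vec :=
  [set d | forall y, C y -> dot d (y - x) <= 0].

(* f(x) = max_{(c0,c) in U} c^T x + c0 (written as a supremum; attained
   since U is compact and nonempty). *)
Definition maxaff (U : set (R * vec)) (x : vec) : R :=
  sup [set dot p.2 x + p.1 | p in U].

Definition binary_set (X : set vec) : Prop :=
  forall x, X x -> forall i, x 0 i = 0 \/ x 0 i = 1.

End Defs.

(* Main.v *)
Require Import Defs.
From HB Require Import structures.
From mathcomp Require Import all_boot all_order all_algebra.
From mathcomp Require Import all_classical all_reals all_analysis.
Import Order.TTheory GRing.Theory Num.Theory.
Import numFieldNormedType.Exports.
Local Open Scope classical_set_scope.
Local Open Scope ring_scope.

Section Aux.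
Variables (R : realType) (n : nat).
Implicit Types (c y z : 'rV[R]_n).

Lemma dotNl c y : dot (- c) y = - dot c y.
Proof. rewrite /dot -sumrN; apply: eq_bigr => i _; by rewrite mxE mulNr. Qed.

Lemma dotBr c y z : dot c (y - z) = dot c y - dot c z.
Proof. rewrite /dot -sumrB; apply: eq_bigr => i _; by rewrite !mxE mulrBr. Qed.

Lemma dot_sum c (s : seq 'rV[R]_n) (l : 'rV[R]_n -> R) :
  dot c (\sum_(v <- s) l v *: v) = \sum_(v <- s) l v * dot c v.
Proof.
elim: s => [|a s IH].
  by rewrite !big_nil /dot big1 // => i _; rewrite mxE mulr0.
rewrite !big_cons -IH /dot mulr_sumr -big_split /=; apply: eq_bigr => i _.
by rewrite !mxE mulrDr mulrCA.
Qed.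

Definition enc (v : 'rV[R]_n) : {ffun 'I_n -> bool} := [ffun i => v 0 i == 1].

Lemma enc_inj (X : set 'rV[R]_n) : binary_set X ->
  forall v w, X v -> X w -> enc v = enc w -> v = w.
Proof.
move=> HX v w Xv Xw E; apply/rowP => i.
have := congr1 (fun g : {ffun 'I_n -> bool} => g i) E; rewrite /enc !ffunE.
have ne : ((0 : R) == 1) = false by rewrite eq_sym oner_eq0.
by case: (HX v Xv i) => ->; case: (HX w Xw i) => ->; rewrite ?eqxx ?ne.
Qed.

End Aux.

Theorem theorem1 (R : realType) (n : nat)
  (X : set 'rV[R]_n) (U : set (R * 'rV[R]_n))
  (HX : binary_set X) (HX0 : X !=set0)
  (HU : compact U) (HU0 : U !=set0)
  (V : nat -> seq 'rV[R]_n) (alpha : nat -> 'rV[R]_n -> R)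
  (x : nat -> 'rV[R]_n) (c : nat -> 'rV[R]_n) (xhat : nat -> 'rV[R]_n) :
  let f := maxaff U in
  let P := chull X in
  let stop k := dot (c k) (x k) <= dot (c k) (xhat k) in
  X (xhat 0%N) ->
  V 1%N = [:: xhat 0%N] ->
  (forall k : nat, (1 <= k)%N -> (forall j : nat, (1 <= j < k)%N -> ~ stop j) ->
     [/\ [/\ (forall v, v \in V k -> 0 <= alpha k v),
             \sum_(v <- undup (V k)) alpha k v = 1
           & x k = \sum_(v <- undup (V k)) alpha k v *: v],
         subdiff f (x k) (c k),
         normal_cone (chull [set v | v \in V k]) (x k) (- c k),
         (X (xhat k) /\ (forall y, X y -> dot (c k) (xhat k) <= dot (c k) y))
       & (~ stop k -> V k.+1 = xhat k :: V k)]) ->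
  exists k : nat, [/\ (1 <= k)%N, stop k, (forall j : nat, (1 <= j < k)%N -> ~ stop j),
     P (x k) & forall y, P y -> f (x k) <= f y].
Proof.
move=> f P stop X0 HV1 H.
have Hind : forall m, (forall j, (1 <= j < m.+1)%N -> ~ stop j) ->
   [/\ uniq (V m.+1), size (V m.+1) = m.+1 & forall v, v \in V m.+1 -> X v].
  elim=> [|m IH] Hno.
    rewrite HV1; split => // v; rewrite inE => /eqP ->; exact: X0.
  have Hno' : forall j, (1 <= j < m.+1)%N -> ~ stop j.
    move=> j /andP[j1 jm]; apply: Hno; rewrite j1 /=; exact: ltnW.
  case: (IH Hno') => Hu Hs HXV.
  case: (H m.+1 erefl Hno') => _ _ Hnc [HXh _] Hnext.
  have Hns : ~ stop m.+1 by apply: Hno; rewrite leqnn.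
  rewrite (Hnext Hns).
  have Hnin : xhat m.+1 \notin V m.+1.
    apply/negP => Hin; apply: Hns.
    have Hc : chull [set v | v \in V m.+1] (xhat m.+1).
      exists [:: xhat m.+1], (fun _ => 1); split => //.
      - by move=> v; rewrite inE => /eqP ->; apply/mem_set.
      - by rewrite big_cons big_nil addr0.
      - by rewrite big_cons big_nil addr0 scale1r.
    have := Hnc _ Hc; rewrite dotNl dotBr oppr_le0 subr_ge0; exact.
  split => /=; first by rewrite Hnin Hu.
    by rewrite Hs.
  move=> v; rewrite inE => /orP[/eqP -> //|]; exact: HXV.
pose N := #|{ffun 'I_n -> bool}|.
have Hex : exists k, (1 <= k)%N && stop k.
  apply: contrapT => Hne.
  have Hno : forall j, (1 <= j < N.+1)%N -> ~ stop j.
    move=> j /andP[j1 _] sj; apply: Hne; exists j; by rewrite j1.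
  case: (Hind N Hno) => Hu Hs HXV.
  have Hmu : uniq (map (@enc R n) (V N.+1)).
    rewrite map_inj_in_uniq // => v w vi wi; apply: (@enc_inj R n X HX); exact: HXV.
  have := max_card (mem (map (@enc R n) (V N.+1))).
  by rewrite (card_uniqP Hmu) size_map Hs ltnn.
case: (ex_minnP Hex) => k /andP[k1 sk] Hmin.
have Hno : forall j, (1 <= j < k)%N -> ~ stop j.
  move=> j /andP[j1 jk] sj; have := Hmin j; rewrite j1 sj => /(_ isT).
  by rewrite leqNgt jk.
case: (H k k1 Hno) => [[Hal Hsum Hx]] Hsd _ [HXh Hopt] _.
case: (Hind k.-1); first by rewrite prednK.
rewrite prednK // => _ _ HXV.
have HP : P (x k).
  exists (undup (V k)), (alpha k); split => //.
  - by move=> v; rewrite mem_undup => /HXV Xv; apply/mem_set.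
  - exact: undup_uniq.
  - by move=> v; rewrite mem_undup; exact: Hal.
exists k; split => // y [s [l [Hsub _ Hl Hl1 ->]]].
apply: le_trans (Hsd _).
rewrite lerDl dotBr subr_ge0 dot_sum.
apply: le_trans sk _.
have -> : dot (c k) (xhat k) = \sum_(v <- s) l v * dot (c k) (xhat k).
  by rewrite -mulr_suml Hl1 mul1r.
rewrite !big_seq; apply: ler_sum => v vs; apply: ler_wpM2l; first exact: Hl.
apply: Hopt; apply/set_mem; exact: Hsub.
Qed.
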